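(* Let $(N,g)$ be a simply connected five-dimensional two-step nilpotent Lie group with a left-invariant Riemannian metric, with Lie algebra $\mathfrak{n}$, Levi-Civita connection $\nabla$, and let $\mathfrak{h}$ denote the center of $\mathfrak{n}$. Then every left-invariant projective vector field $X\in\mathfrak{n}$ is affine, and a left-invariant vector field $X\in\mathfrak{n}$ is affine if and only if $X\in\mathfrak{h}$.
   Context: A Lie algebra $\mathfrak{n}$ is two-step nilpotent if $[\mathfrak{n},\mathfrak{n}]\neq 0$ and $[\mathfrak{n},[\mathfrak{n},\mathfrak{n}]]=0$. Left-invariant vector fields are identified with elements of $\mathfrak{n}=T_eN$, and $g$ with an inner product $\langle\cdot,\cdot\rangle$ on $\mathfrak{n}$. Up to isometry, such $(\mathfrak{n},\langle\cdot,\cdot\rangle)$ admits an orthonormal basis $e_1,\dots,e_5$ with one of the following bracket structures (all brackets not listed being zero): (Case 1, center of dimension 1) $[e_1,e_2]=\lambda e_5$, $[e_3,e_4]=\mu e_5$ with $\lambda\ge\mu>0$; (Case 2, center of dimension 2) $[e_1,e_2]=\lambda e_4$, $[e_1,e_3]=\mu e_5$ with $\lambda\ge\mu>0$; (Case 3, center of dimension 3) $[e_1,e_2]=\lambda e_3$ with $\lambda>0$. A vector field $X$ is projective if there is a 1-form $\alpha$ with $(\mathcal{L}_X\nabla)(U,V)=\alpha(U)V+\alpha(V)U$ for all vector fields $U,V$, where $(\mathcal{L}_X\nabla)(U,V)=[X,\nabla_UV]-\nabla_{[X,U]}V-\nabla_U[X,V]$; $X$ is affine if $\mathcal{L}_X\nabla=0$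 (equivalently, projective with $\alpha=0$). *)

(* Defs.v *)
From HB Require Import structures.
From mathcomp Require Import all_boot all_order all_algebra.
Set Implicit Arguments. Unset Strict Implicit. Unset Printing Implicit Defensive.
Import Order.TTheory GRing.Theory Num.Theory.
Local Open Scope ring_scope.

(* The 5-dimensional metric Lie algebra is modelled as 'rV[R]_5 with the
   standard inner product (i.e. the standard basis is orthonormal), and with
   a bracket given by structure constants c i j = [e_i, e_j]. *)

Definition ebas (R : rcfType) (k : 'I_5) : 'rV[R]_5 := delta_mx 0 k.

Definition ip (R : rcfType) (u v : 'rV[R]_5) : R := (u *m v^T) 0 0.

Definition lb (R : rcfType) (c : 'I_5 -> 'I_5 -> 'rV[R]_5) (u v : 'rV[R]_5)
  : 'rV[R]_5 := \sum_(i < 5) \sum_(j < 5) (u 0 i * v 0 j) *: c i j.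

Definition two_step_nilpotent (R : rcfType) (c : 'I_5 -> 'I_5 -> 'rV[R]_5) : Prop :=
  [/\ forall i j, c i j = - c j i,
      forall u v w, lb c u (lb c v w) + lb c v (lb c w u) + lb c w (lb c u v) = 0,
      exists u v, lb c u v != 0
    & forall u v w, lb c u (lb c v w) = 0].

(* metric adjoint of ad_u :  <adj c u v, w> = <v, [u, w]> *)
Definition adj (R : rcfType) (c : 'I_5 -> 'I_5 -> 'rV[R]_5) (u v : 'rV[R]_5)
  : 'rV[R]_5 := \sum_(k < 5) ip v (lb c u (ebas R k)) *: ebas R k.

(* Levi-Civita connection on left-invariant fields (Koszul formula) *)
Definition nabla (R : rcfType) (c : 'I_5 -> 'I_5 -> 'rV[R]_5) (u v : 'rV[R]_5)
  : 'rV[R]_5 := 2^-1 *: (lb c u v - adj c u v - adj c v u).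

Definition lieDer (R : rcfType) (c : 'I_5 -> 'I_5 -> 'rV[R]_5) (x u v : 'rV[R]_5)
  : 'rV[R]_5 := lb c x (nabla c u v) - nabla c (lb c x u) v - nabla c u (lb c x v).

(* projective: exists a 1-form alpha (here alpha = <a, .>, which covers all
   linear functionals) with (L_X nabla)(U,V) = alpha(U) V + alpha(V) U *)
Definition projective (R : rcfType) (c : 'I_5 -> 'I_5 -> 'rV[R]_5) (x : 'rV[R]_5) : Prop :=
  exists a : 'rV[R]_5, forall u v : 'rV[R]_5,
    lieDer c x u v = ip a u *: v + ip a v *: u.

Definition affine (R : rcfType) (c : 'I_5 -> 'I_5 -> 'rV[R]_5) (x : 'rV[R]_5) : Prop :=
  forall u v : 'rV[R]_5, lieDer c x u v = 0.

Definition in_center (R : rcfType) (c : 'I_5 -> 'I_5 -> 'rV[R]_5) (x : 'rV[R]_5) : Prop :=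
  forall y : 'rV[R]_5, lb c x y = 0.

(* Main.v *)
Require Import Defs.
From HB Require Import structures.
From mathcomp Require Import all_boot all_order all_algebra.
Import Order.TTheory GRing.Theory Num.Theory.
Set Implicit Arguments. Unset Strict Implicit.
Local Open Scope ring_scope.

Definition adM (R : rcfType) (c : 'I_5 -> 'I_5 -> 'rV[R]_5) (u : 'rV[R]_5) : 'M[R]_5 :=
  \matrix_(j, l) \sum_i u 0 i * c i j 0 l.
Definition Bm (R : rcfType) (c : 'I_5 -> 'I_5 -> 'rV[R]_5) (v : 'rV[R]_5) : 'M[R]_5 :=
  \matrix_(i, k) \sum_l v 0 l * c i k 0 l.

Lemma lbE (R : rcfType) (c : 'I_5 -> 'I_5 -> 'rV[R]_5) u v : lb c u v = v *m adM c u.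
Proof.
apply/rowP => l; rewrite /lb !mxE summxE.
under eq_bigr => i _ do rewrite summxE.
rewrite exchange_big /=; apply: eq_bigr => j _.
rewrite mxE mulr_sumr; apply: eq_bigr => i _.
by rewrite !mxE mulrA [u 0 i * _]mulrC.
Qed.

Lemma lb_anti (R : rcfType) (c : 'I_5 -> 'I_5 -> 'rV[R]_5) u v :
  (forall i j, c i j = - c j i) -> lb c u v = - lb c v u.
Proof.
move=> H; rewrite /lb exchange_big /= -sumrN; apply: eq_bigr => i _.
rewrite -sumrN; apply: eq_bigr => j _.
by rewrite (H j i) scalerN mulrC.
Qed.

Lemma ipE (R : rcfType) (u v : 'rV[R]_5) : ip u v = \sum_k u 0 k * v 0 k.
Proof. by rewrite /ip !mxE; apply: eq_bigr => k _; rewrite mxE. Qed.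

Lemma ip_sym (R : rcfType) (u v : 'rV[R]_5) : ip u v = ip v u.
Proof. by rewrite !ipE; apply: eq_bigr => k _; rewrite mulrC. Qed.

Lemma ip_e (R : rcfType) (u : 'rV[R]_5) k : ip u (ebas R k) = u 0 k.
Proof.
rewrite ipE (bigD1 k) //= big1 ?addr0; first by rewrite /ebas mxE !eqxx mulr1.
by move=> i /negbTE ik; rewrite /ebas mxE ik andbF mulr0.
Qed.

Lemma adjE (R : rcfType) (c : 'I_5 -> 'I_5 -> 'rV[R]_5) u v :
  adj c u v = v *m (adM c u)^T.
Proof.
rewrite [RHS]row_sum_delta /adj; apply: eq_bigr => k _; congr (_ *: _).
rewrite lbE -/(ebas R k) /ebas -rowE ipE !mxE; apply: eq_bigr => l _.
by rewrite !mxE.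
Qed.

Lemma adj_ip (R : rcfType) (c : 'I_5 -> 'I_5 -> 'rV[R]_5) u v w :
  ip (adj c u v) w = ip v (lb c u w).
Proof. by rewrite /ip adjE lbE trmx_mul mulmxA. Qed.

Lemma adjE2 (R : rcfType) (c : 'I_5 -> 'I_5 -> 'rV[R]_5) u v :
  adj c u v = u *m Bm c v.
Proof.
rewrite adjE; apply/rowP => k; rewrite !mxE.
under eq_bigr => l _ do rewrite !mxE mulr_sumr.
rewrite exchange_big /=; apply: eq_bigr => i _.
rewrite !mxE mulr_sumr; apply: eq_bigr => l _.
by rewrite mulrCA.
Qed.

Definition Nm (R : rcfType) (c : 'I_5 -> 'I_5 -> 'rV[R]_5) (v : 'rV[R]_5) : 'M[R]_5 :=
  2^-1 *: (- adM c v - Bm c v - (adM c v)^T).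

Lemma nablaE (R : rcfType) (c : 'I_5 -> 'I_5 -> 'rV[R]_5) u v :
  (forall i j, c i j = - c j i) -> nabla c u v = u *m Nm c v.
Proof.
move=> H; rewrite /nabla /Nm (lb_anti _ _ H) lbE adjE2 [adj c v u]adjE.
by rewrite -scalemxAr !mulmxDr !mulmxN.
Qed.

Lemma ip0 (R : rcfType) (u : 'rV[R]_5) : ip u 0 = 0.
Proof. by rewrite /ip trmx0 mulmx0 mxE. Qed.

Lemma lb0 (R : rcfType) (c : 'I_5 -> 'I_5 -> 'rV[R]_5) u : lb c u 0 = 0.
Proof. by rewrite lbE mul0mx. Qed.

Lemma lbZ (R : rcfType) (c : 'I_5 -> 'I_5 -> 'rV[R]_5) u a v : lb c u (a *: v) = a *: lb c u v.
Proof. by rewrite !lbE scalemxAl. Qed.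

Lemma adj_cent (R : rcfType) (c : 'I_5 -> 'I_5 -> 'rV[R]_5) z u :
  in_center c z -> adj c z u = 0.
Proof.
move=> hz; rewrite /adj big1 // => k _; by rewrite hz ip0 scale0r.
Qed.

Lemma nabla0 (R : rcfType) (c : 'I_5 -> 'I_5 -> 'rV[R]_5) u : nabla c u 0 = 0.
Proof. by rewrite /nabla lb0 adjE adjE2 !mul0mx !subr0 scaler0. Qed.

Lemma nabla_cent (R : rcfType) (c : 'I_5 -> 'I_5 -> 'rV[R]_5) u z :
  (forall i j, c i j = - c j i) -> in_center c z ->
  nabla c u z = - (2^-1 *: adj c u z).
Proof.
move=> H hz; rewrite /nabla (lb_anti _ _ H) hz (adj_cent _ hz) oppr0 addr0 add0r.
by rewrite scalerN.
Qed.

Lemma cent_br (R : rcfType) (c : 'I_5 -> 'I_5 -> 'rV[R]_5) x w :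
  two_step_nilpotent c -> in_center c (lb c x w).
Proof.
case=> H _ _ H2 y; by rewrite (lb_anti _ _ H) H2 oppr0.
Qed.

Lemma lieDer_cent (R : rcfType) (c : 'I_5 -> 'I_5 -> 'rV[R]_5) x u z :
  two_step_nilpotent c -> in_center c z ->
  lieDer c x u z = - (2^-1 *: lb c x (adj c u z)).
Proof.
move=> T hz; have [H _ _ _] := T.
rewrite /lieDer (nabla_cent _ H hz) (nabla_cent _ H hz).
rewrite (adj_cent _ (cent_br _ _ T)) scaler0 oppr0 subr0.
rewrite (lb_anti x z H) hz oppr0 nabla0 subr0.
by rewrite -scaleNr lbZ scaleNr.
Qed.

Lemma ip_pos (R : rcfType) (u : 'rV[R]_5) : ip u u = 0 -> u = 0.
Proof.
rewrite ipE => h; apply/rowP => k; rewrite mxE.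
have hk : u 0 k * u 0 k = 0.
  by apply: (psumr_eq0P _ h) => // i _; rewrite -expr2 sqr_ge0.
by move/eqP: hk; rewrite mulf_eq0 orbb => /eqP.
Qed.

Lemma lb_self (R : rcfType) (c : 'I_5 -> 'I_5 -> 'rV[R]_5) u :
  (forall i j, c i j = - c j i) -> lb c u u = 0.
Proof.
move=> H; have h := lb_anti u u H.
have : (2:R) *: lb c u u = 0 by rewrite scaler_nat mulr2n {1}h addNr.
by move/eqP; rewrite scaler_eq0 pnatr_eq0 /= => /eqP.
Qed.

Lemma affine_center (R : rcfType) (c : 'I_5 -> 'I_5 -> 'rV[R]_5) x :
  two_step_nilpotent c -> affine c x -> in_center c x.
Proof.
move=> T ha w; set z := lb c x w.
have hz : in_center c z by apply: cent_br.
have h1 : lb c x (adj c x z) = 0.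
  have := ha x z; rewrite (lieDer_cent _ _ T hz) => /eqP.
  by rewrite oppr_eq0 scaler_eq0 invr_eq0 pnatr_eq0 /= => /eqP.
have h2 : adj c x z = 0 by apply: ip_pos; rewrite adj_ip h1 ip0.
by apply: ip_pos; rewrite /z -adj_ip h2 ip_sym ip0.
Qed.

Lemma center_affine (R : rcfType) (c : 'I_5 -> 'I_5 -> 'rV[R]_5) x :
  two_step_nilpotent c -> in_center c x -> affine c x.
Proof.
case=> H _ _ _ hx u v; rewrite /lieDer !hx.
by rewrite nabla0 (nablaE _ _ H) mul0mx !subr0.
Qed.

Lemma adj_diag (R : rcfType) (c : 'I_5 -> 'I_5 -> 'rV[R]_5) k w :
  (forall i j, c i j = - c j i) -> (adj c (ebas R k) w) 0 k = 0.
Proof. by move=> H; rewrite -ip_e adj_ip lb_self // ip0. Qed.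

Lemma lieDer_row (R : rcfType) (c : 'I_5 -> 'I_5 -> 'rV[R]_5) x k v :
  two_step_nilpotent c ->
  lieDer c x (ebas R k) v = row k (Nm c v *m adM c x) - row k (adM c x *m Nm c v)
     + 2^-1 *: adj c (ebas R k) (lb c x v).
Proof.
move=> T; have [H _ _ _] := T.
rewrite /lieDer (nabla_cent _ H (cent_br _ _ T)) opprK.
by rewrite !(nablaE _ _ H) lbE !lbE !row_mul -!rowE /ebas.
Qed.

Lemma trace_lieDer (R : rcfType) (c : 'I_5 -> 'I_5 -> 'rV[R]_5) x v :
  two_step_nilpotent c ->
  \sum_k (lieDer c x (ebas R k) v) 0 k = 0.
Proof.
move=> T; have [H _ _ _] := T.
under eq_bigr => k _ do rewrite (lieDer_row _ _ _ T) !mxE (adj_diag _ _ H) mulr0 addr0.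
rewrite sumrB.
have E : forall M : 'M[R]_5, \sum_k M k k = \tr M by [].
rewrite [X in _ - X]exchange_big /=; apply/eqP; rewrite subr_eq0; apply/eqP.
by apply: eq_bigr => i _; apply: eq_bigr => j _; rewrite mulrC.
Qed.

Lemma proj_affine (R : rcfType) (c : 'I_5 -> 'I_5 -> 'rV[R]_5) x :
  two_step_nilpotent c -> projective c x -> affine c x.
Proof.
move=> T [a ha].
have al : forall v, ip a v = 0.
  move=> v; have := trace_lieDer x v T.
  under eq_bigr => k _ do rewrite ha ip_e /ebas !mxE !eqxx mulr1.
  rewrite big_split /= -ipE sumr_const card_ord -mulr_natr -{1}(mulr1 (ip a v)) -mulrDr.
  move/eqP; rewrite mulf_eq0 => /orP [/eqP //|]. by rewrite addrC natr1 pnatr_eq0.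
by move=> u v; rewrite ha !al !scale0r addr0.
Qed.

Theorem mainTheorem2 (R : rcfType) (c : 'I_5 -> 'I_5 -> 'rV[R]_5) :
  two_step_nilpotent c ->
  (forall x : 'rV[R]_5, projective c x -> affine c x) /\
  (forall x : 'rV[R]_5, affine c x <-> in_center c x).
Proof.
move=> T; split=> x; first exact: proj_affine.
by split; [apply: affine_center | apply: center_affine].
Qed.
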